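(* Let $p \geq 6$ and $q \geq 3$ be integers and let $L$ be the Laplacian of the graph $K_p \oplus C_q$. Let $E_K$ be the span of the vectors $e_{-1}-e_{-k}$, $k=2,\ldots,p-1$ (equivalently, the vectors supported on $\{-p+1,\ldots,-1\}$ whose entries sum to $0$), and $E_K^\perp$ its orthogonal complement. For $\lambda > 4$ set $\sigma_+(\lambda) = \tfrac12[(2-\lambda) + \sqrt{(2-\lambda)^2-4}]$ and $$F_q(\lambda) = (1-\lambda)\,\sigma_+\,\frac{1+\sigma_+^{2q-3}}{1+\sigma_+^{2q-1}} - (p-\lambda)(1-\lambda) + (p-1), \quad \sigma_+ = \sigma_+(\lambda).$$ Then $\lambda > 4$ is an eigenvalue of $L$ with a corresponding eigenvector $v \in E_K^\perp$ if and only if $F_q(\lambda) = 0$. Furthermore, $F_q(\lambda) = 0$ has exactly one solution in $(p,p+2]$ and no solutions in $(4,p] \cup (p+2,+\infty)$.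
   Context: For integers $p \geq 3$, $q \geq 2$, the graph $K_p \oplus C_q$ has vertex set $\{-p+1,\ldots,0\} \cup \{1,\ldots,q-1\}$. Its edges are: every pair of distinct vertices in $\{-p+1,\ldots,0\}$, the edge $\{0,1\}$, and the edges $\{j,j+1\}$ for $1 \leq j \leq q-2$. The Laplacian $L$ is the matrix with $L_{ii}$ equal to the degree of vertex $i$, $L_{ij}=-1$ if $i\neq j$ are adjacent and $0$ otherwise. Vectors are real functions on the vertex set with the standard inner product; $e_j$ is the indicator vector of vertex $j$. *)

(* Defs.v *)
From HB Require Import structures.
From mathcomp Require Import all_boot all_order all_algebra.
From mathcomp Require Import reals.
Set Implicit Arguments. Unset Strict Implicit. Unset Printing Implicit Defensive.
Import Order.TTheory GRing.Theory Num.Theory.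
Local Open Scope ring_scope.

(* The graph K_p (+) C_q has p + q - 1 vertices.  The ordinal i : 'I_(p+q-1)
   represents the vertex with integer label  i - (p - 1), so that the labels
   range over {-p+1, ..., 0} U {1, ..., q-1}. *)
Definition nv (p q : nat) : nat := (p + q - 1)%N.

Definition vtx (p q : nat) (i : 'I_(nv p q)) : int := (i%:Z - (p - 1)%:Z)%R.

Definition adj_lab (q : nat) (x y : int) : bool :=
  (x != y) &&
  [|| (x <= 0) && (y <= 0),
      (x == 0) && (y == 1),
      (x == 1) && (y == 0),
      [&& 1 <= x, y == x + 1 & y <= (q - 1)%:Z]
    | [&& 1 <= y, x == y + 1 & x <= (q - 1)%:Z] ].

Definition adj (p q : nat) (i j : 'I_(nv p q)) : bool :=
  adj_lab q (vtx i) (vtx j).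

Definition deg (p q : nat) (i : 'I_(nv p q)) : nat := #|[set j | adj i j]|.

Definition laplacian (R : ringType) (p q : nat) : 'M[R]_(nv p q) :=
  \matrix_(i, j) (if i == j then (deg i)%:R
                  else if adj i j then -1 else 0).

Definition evec (R : ringType) (p q : nat) (j : int) : 'rV[R]_(nv p q) :=
  \row_i (if vtx i == j then 1 else 0).

(* E_K : the matrix whose rows are e_{-1} - e_{-k}, k = 2, ..., p-1
   (row index m : 'I_(p-2) corresponds to k = m + 2). *)
Definition EK (R : ringType) (p q : nat) : 'M[R]_((p - 2)%N, nv p q) :=
  \matrix_(m < (p - 2)%N, j < nv p q)
     (evec R p q (-1) - evec R p q (- (m.+2)%:Z)) 0 j.

Definition in_EKperp (R : fieldType) (p q : nat) (v : 'cV[R]_(nv p q)) : Prop :=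
  forall u : 'rV[R]_(nv p q), (u <= EK R p q)%MS -> u *m v = 0.

Definition sigma_plus (R : rcfType) (l : R) : R :=
  ((2 - l) + Num.sqrt ((2 - l) ^+ 2 - 4)) / 2.

Definition Fq (R : rcfType) (p q : nat) (l : R) : R :=
  let s := sigma_plus l in
  (1 - l) * s * ((1 + s ^+ (2 * q - 3)) / (1 + s ^+ (2 * q - 1)))
  - (p%:R - l) * (1 - l) + (p%:R - 1).

(* Main.v *)
Require Import Defs.
From HB Require Import structures.
From mathcomp Require Import all_boot all_order all_algebra.
From mathcomp Require Import reals.
From mathcomp Require Import all_classical all_reals all_analysis.
From mathcomp Require Import lra ring zify.
Import Order.TTheory GRing.Theory Num.Theory.
Import numFieldNormedType.Exports.
Local Open Scope ring_scope.

Fixpoint xs {R : realType} (k : nat) (l : R) : R :=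
  if k is k'.+1 then (2 - l - xs k' l)^-1 else 1.

Lemma xs_bound {R : realType} k (l : R) : 4 < l -> -1 < xs k l <= 1.
Proof.
move=> hl; elim: k => [|k /andP[h1 h2]] /=; first by rewrite lexx andbT; lra.
have hn : 2 - l - xs k l < -1 by lra.
have hn0 : 2 - l - xs k l < 0 by lra.
apply/andP; split.
  rewrite -(opprK (_^-1)) -invrN ltrN2 invf_lt1 //; lra.
rewrite ltW // (lt_trans _ (ltr01 : (0:R) < 1)) // invr_lt0 //.
Qed.

Lemma xs_cont (R : realType) k (l : R) : 4 < l -> {for l, continuous (fun x : R => xs k x)}.
Proof.
move=> hl; elim: k => [|k IH] /=; first exact: cst_continuous.
have hc := @continuousV R R (fun l => 2 - l - xs k l) l.
apply: hc.
  have := xs_bound k l hl; move=> /andP[h1 h2]; apply/negP => /eqP; lra.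
apply: cvgB => //; apply: cvgB => //; first exact: cvg_cst.
Qed.

Lemma xs_neg {R : realType} k (l : R) : 4 < l -> (0 < k)%N -> xs k l < 0.
Proof.
move=> hl; case: k => // k _ /=; have /andP[h1 h2] := xs_bound k l hl.
rewrite invr_lt0; lra.
Qed.

Lemma xs_mono {R : realType} k (l1 l2 : R) : 4 < l1 -> l1 <= l2 -> xs k l1 <= xs k l2.
Proof.
move=> h1 h12; elim: k => [|k IH] /=; first by [].
have /andP[a1 a2] := xs_bound k l1 h1.
have /andP[b1 b2] := xs_bound k l2 (lt_le_trans h1 h12).
set D1 := 2 - l1 - xs k l1; set D2 := 2 - l2 - xs k l2.
have d1 : D1 < -1 by rewrite /D1; lra.
have d2 : D2 < -1 by rewrite /D2; lra.
have d12 : D2 <= D1 by rewrite /D1 /D2; lra.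
have e1 : D1 * D1^-1 = 1 by rewrite mulfV //; apply/eqP => e; lra.
have e2 : D2 * D2^-1 = 1 by rewrite mulfV //; apply/eqP => e; lra.
have n1 : D1^-1 < 0 by rewrite invr_lt0; lra.
have n2 : D2^-1 < 0 by rewrite invr_lt0; lra.
nra.
Qed.

Definition Gf {R : realType} (p q : nat) (l : R) : R :=
  (1 - l) * xs (q-1) l - (p%:R - l) * (1 - l) + (p%:R - 1).

Lemma Gf_cont {R : realType} p q (l : R) : 4 < l -> {for l, continuous (fun x : R => Gf p q x)}%classic.
Proof.
move=> hl; rewrite /Gf.
apply: cvgD; last exact: cvg_cst.
apply: cvgB; apply: cvgM.
- apply: cvgB => //; exact: cvg_cst.
- exact: xs_cont.
- apply: cvgB => //; exact: cvg_cst.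
- apply: cvgB => //; exact: cvg_cst.
Qed.

Lemma Gf_root {R : realType} p q : (6 <= p)%N -> (2 <= q)%N ->
  exists c : R, [/\ p%:R < c, c <= p%:R + 2 & Gf p q c = 0].
Proof.
move=> hp hq.
have p6 : (6:R) <= p%:R by rewrite (ler_nat R 6 p).
have hc : {within `[p%:R, p%:R + 2], continuous (fun x : R => Gf p q x)}%classic.
  apply: continuous_subspace_itv => x; rewrite in_itv /= => /andP[h1 h2].
  apply: Gf_cont; lra.
have := xs_bound (q-1) (p%:R : R); have := xs_bound (q-1) (p%:R + 2 : R).
move=> /(_ ltac:(lra)) /andP[b1 b2] /(_ ltac:(lra)) /andP[b3 b4].
have Gp : 0 < Gf p q (p%:R : R).
  rewrite /Gf.
  have := xs_neg (q-1) (p%:R : R) ltac:(lra) ltac:(lia).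
  set x := xs _ _ => hx.
  have : 0 < (p%:R - 1) * (- x) by apply: mulr_gt0; lra.
  lra.
have Gp2 : Gf p q (p%:R + 2 : R) < 0.
  rewrite /Gf.
  have : 0 < (p%:R + 1) * (xs (q - 1) (p%:R + 2 : R) + 1) by apply: mulr_gt0; lra.
  lra.
have hm : Num.min (Gf p q (p%:R : R)) (Gf p q (p%:R + 2)) <= 0 <= Num.max (Gf p q (p%:R : R)) (Gf p q (p%:R + 2)).
  rewrite ge_min le_max; apply/andP; split; apply/orP; [right|left]; lra.
have [c] := @IVT R (fun x => Gf p q x) (p%:R) (p%:R+2) 0 ltac:(lra) hc hm.
rewrite in_itv /= => /andP[h1 h2] hG; exists c; split => //.
rewrite lt_neqAle h1 andbT; apply/eqP => e; rewrite -e in hG; lra.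
Qed.

Lemma Gf_unique {R : realType} p q (l1 l2 : R) : (2 <= p)%N -> 4 < l1 -> 4 < l2 ->
  Gf p q l1 = 0 -> Gf p q l2 = 0 -> l1 = l2.
Proof.
move=> hp.
have p2 : (2:R) <= p%:R by rewrite (ler_nat R 2 p).
wlog: l1 l2 / l1 <= l2.
  move=> W h1 h2 g1 g2; case: (lerP l1 l2) => h; first exact: W.
  by symmetry; apply: W => //; apply: ltW.
move=> le12 h1 h2; rewrite /Gf => g1 g2.
have := xs_mono (q-1) _ _ h1 le12.
set x1 := xs _ l1; set x2 := xs _ l2 => hx.
case: (ltrP l1 l2) => h; last by apply/le_anti; rewrite le12 h.
have E1 : (l1 - 1) * (l1 - p%:R + x1) = p%:R - 1.
  have e : (l1 - 1) * (l1 - p%:R + x1) = (p%:R - 1) - ((1 - l1) * x1 - (p%:R - l1) * (1 - l1) + (p%:R - 1)) by ring.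
  by rewrite e g1 subr0.
have E2 : (l2 - 1) * (l2 - p%:R + x2) = p%:R - 1.
  have e : (l2 - 1) * (l2 - p%:R + x2) = (p%:R - 1) - ((1 - l2) * x2 - (p%:R - l2) * (1 - l2) + (p%:R - 1)) by ring.
  by rewrite e g2 subr0.
have A1 : 0 < l1 - p%:R + x1.
  move: E1 => e; case: (ltrP 0 (l1 - p%:R + x1)) => // hA.
  have : (l1 - 1) * (l1 - p%:R + x1) <= 0 by rewrite pmulr_rle0 //; lra.
  lra.
have : (l1 - 1) * (l1 - p%:R + x1) < (l2 - 1) * (l2 - p%:R + x2).
  apply: (@lt_le_trans _ _ ((l2 - 1) * (l1 - p%:R + x1))).
    by rewrite ltr_pM2r //; lra.
  by rewrite ler_pM2l //; lra.
by rewrite E1 E2 ltxx.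
Qed.

Lemma Gf_neq0 {R : realType} p q (l : R) : (2 <= p)%N -> (2 <= q)%N ->
  (4 < l <= p%:R) || (p%:R + 2 < l) -> Gf p q l != 0.
Proof.
move=> hp hq.
have p2 : (2:R) <= p%:R by rewrite (ler_nat R 2 p).
case/orP => [/andP[h1 h2]|h].
  have := xs_neg (q-1) l h1 ltac:(lia); set x := xs _ _ => hx.
  have : 0 < (l - 1) * (p%:R - l - x) by apply: mulr_gt0; lra.
  rewrite /Gf -/x; move=> H; apply/eqP; lra.
have h1 : 4 < l by lra.
have /andP[b1 b2] := xs_bound (q-1) l h1; move: b1 b2; set x := xs _ _ => b1 b2.
have : (l - 1) * 1 < (l - 1) * (l - p%:R + x) by rewrite ltr_pM2l; lra.
rewrite /Gf -/x; move=> H; apply/eqP; lra.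
Qed.

Lemma sigma_facts {R : realType} {l : R} : 4 < l ->
  let s := sigma_plus l in [/\ -1 < s, s < 0 & l = 2 - s - s^-1].
Proof.
move=> hl s.
have hD : 0 <= (2 - l) ^+ 2 - 4 by nra.
have hr := sqr_sqrtr hD; have hr0 := sqrtr_ge0 ((2 - l) ^+ 2 - 4).
move: hr hr0; set r := Num.sqrt _ => hr hr0.
have hs : s = ((2 - l) + r) / 2 by [].
have rlt : r < l - 2 by nra.
have rgt : l - 4 < r by nra.
have s0 : s < 0 by rewrite hs; lra.
split; [rewrite hs; lra| exact: s0|].
have sn : s != 0 by apply/eqP => e; lra.
have q : s ^+ 2 - (2 - l) * s + 1 = 0 by rewrite hs; nra.
apply/eqP; rewrite -subr_eq0; apply/eqP.
have -> : l - (2 - s - s^-1) = (s ^+ 2 - (2 - l) * s + 1) / s by field.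
by rewrite q mul0r.
Qed.

Lemma one_plus_pow_pos {R : realType} (s : R) n : -1 < s < 0 -> 0 < 1 + s ^+ n.
Proof.
move=> /andP[h1 h2]; case: n => [|n]; first by rewrite expr0; lra.
have : `|s ^+ n.+1| < 1.
  rewrite normrX exprn_ilt1 //; rewrite ltr0_norm //; lra.
rewrite ltr_norml => /andP[a _]; lra.
Qed.

Lemma xs_sigma {R : realType} (l : R) k : 4 < l ->
  let s := sigma_plus l in
  xs k.+1 l = s * (1 + s ^+ (2 * k + 1)) / (1 + s ^+ (2 * k + 3)).
Proof.
move=> hl s; have [h1 h2 hls] := sigma_facts hl; rewrite -/s in h1 h2 hls.
have sn : s != 0 by apply/eqP => e; lra.
have hpos n : 0 < 1 + s ^+ n by apply: one_plus_pow_pos; rewrite h1 h2.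
have nz n : 1 + s ^+ n != 0 by apply/eqP => e; have := hpos n; lra.
elim: k => [|k IH].
  rewrite /= hls.
  have e3 : 1 + s ^+ 3 = (1 + s) * (s ^+ 2 - s + 1) by ring.
  have nz2 : s ^+ 2 - s + 1 != 0 by apply/eqP => e; nra.
  have nz1 : 1 + s != 0 by apply/eqP => e; lra.
  rewrite e3; field.
  by rewrite nz2 nz1 sn.
rewrite [xs k.+2 l]/= -/(xs k.+1 l) IH.
set S := s ^+ (2 * k + 1).
have e3 : s ^+ (2 * k + 3) = S * s ^+ 2 by rewrite /S -exprD; congr (_ ^+ _); lia.
have e5 : s ^+ (2 * k.+1 + 3) = S * s ^+ 4 by rewrite /S -exprD; congr (_ ^+ _); lia.
have e5' : s ^+ (2 * k.+1 + 1) = S * s ^+ 2 by rewrite /S -exprD; congr (_ ^+ _); lia.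
have n3 := nz (2 * k + 3); have n5 := nz (2 * k.+1 + 3); rewrite e3 in n3; rewrite e5 in n5.
rewrite e3 e5 e5'.
set D := 2 - l - _.
have hD : (s * (1 + S * s ^+ 2) / (1 + S * s ^+ 4)) * D = 1.
  rewrite /D hls; field.
  by rewrite n3 n5 sn.
have Dn : D != 0 by apply/eqP => e; rewrite e mulr0 in hD; move/eqP: hD; rewrite eq_sym oner_eq0.
by apply: (mulIf Dn); rewrite mulVf // hD.
Qed.

Definition adjN (p a b : nat) : bool :=
  (a != b) && [|| (a <= p-1)%N && (b <= p-1)%N, (p-1 <= a)%N && (b == a.+1) | (p-1 <= b)%N && (a == b.+1)].

Lemma adjE p q (i j : 'I_(nv p q)) : (1 <= p)%N -> adj i j = adjN p i j.
Proof.
move=> hp; have := ltn_ord i; have := ltn_ord j; rewrite /adj /adj_lab /vtx /adjN /nv.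
move: (nat_of_ord i) (nat_of_ord j) => a b ha hb.
lia.
Qed.

Definition fv {R : ringType} {n : nat} (v : 'cV[R]_n) (j : nat) : R :=
  if insub j is Some i then v i 0 else 0.

Lemma fvE {R : ringType} {n : nat} (v : 'cV[R]_n) (i : 'I_n) : fv v i = v i 0.
Proof. by rewrite /fv valK. Qed.

Lemma Lv {R : ringType} p q (v : 'cV[R]_(nv p q)) (i : 'I_(nv p q)) : (1 <= p)%N ->
  (laplacian R p q *m v) i 0 =
  \sum_(0 <= j < nv p q) (if adjN p i j then fv v i - fv v j else 0).
Proof.
move=> hp; rewrite big_mkord !mxE.
have adjii : adj i i = false by rewrite adjE // /adjN eqxx.
have -> : \sum_j laplacian R p q i j * v j 0 =
   \sum_j ((if j == i then (deg i)%:R * v i 0 else 0) + (if adj i j then - v j 0 else 0)).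
  apply: eq_bigr => j _; rewrite /laplacian mxE.
  case: (eqVneq j i) => [->|ne]; first by rewrite adjii addr0.
  by rewrite add0r; case: (adj i j); rewrite ?mulN1r ?mul0r.
rewrite big_split /= -big_mkcond big_pred1_eq.
have -> : \sum_(j < nv p q) (if adjN p i j then fv v i - fv v j else 0) =
   \sum_j ((if adj i j then fv v i else 0) + (if adj i j then - v j 0 else 0)).
  apply: eq_bigr => j _; rewrite -adjE // fvE fvE; case: (adj i j); by rewrite ?addr0.
rewrite big_split /= -big_mkcond /=; congr (_ + _).
rewrite -big_mkcond sumr_const fvE /deg -[RHS]mulr_natl; congr (_ * _); congr (_%:R).
by apply: eq_card => j; rewrite inE.
Qed.

Section Sums.
Variable R : ringType.
Implicit Types h : nat -> R.

Lemma sum0 m n h : (forall j, (m <= j < n)%N -> h j = 0) -> \sum_(m <= j < n) h j = 0.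
Proof. by move=> H; apply: big1_seq => j /andP[_]; rewrite mem_index_iota => /H. Qed.

Lemma sum_pt m c n h : (m <= c < n)%N -> (forall j, (m <= j < n)%N -> j != c -> h j = 0) ->
  \sum_(m <= j < n) h j = h c.
Proof.
move=> /andP[h1 h2] H.
rewrite (big_cat_nat _ (n := c)) //=; last by apply: ltnW.
rewrite sum0; last by move=> j /andP[a b]; apply: H; lia.
rewrite big_ltn // sum0 ?add0r ?addr0 //.
move=> j /andP[a b]; apply: H; lia.
Qed.

Lemma sum_cst m n h x : (forall j, (m <= j < n)%N -> h j = x) -> \sum_(m <= j < n) h j = x *+ (n - m).
Proof.
move=> H; rewrite -sumr_const_nat; apply: eq_big_nat => j hj; exact: H.
Qed.
End Sums.

Definition Ssum {R : ringType} p q (f : nat -> R) (a : nat) : R :=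
  \sum_(0 <= j < nv p q) (if adjN p a j then f a - f j else 0).

Section Cases.
Variables (R : ringType) (p q : nat) (f : nat -> R).
Hypotheses (hp : (2 <= p)%N) (hq : (3 <= q)%N) (hf : forall j, (j < p - 1)%N -> f j = f 0).

Lemma SA a : (a < p - 1)%N -> Ssum p q f a = f 0 - f (p - 1).
Proof.
move=> ha; rewrite /Ssum (big_cat_nat _ (n := (p-1)%N)) //=; last by rewrite /nv; lia.
rewrite sum0 ?add0r; last first.
  move=> j hj; case: (adjN p a j) => //.
  by rewrite (hf a ha) (hf j ltac:(lia)) subrr.
rewrite (@sum_pt _ _ (p-1)%N); last 2 first.
- rewrite /nv; lia.
- by move=> j hj hne; have -> : adjN p a j = false by rewrite /adjN; lia.
have -> : adjN p a (p-1) = true by rewrite /adjN; lia.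
by rewrite (hf a ha).
Qed.

Lemma SB : Ssum p q f (p - 1) = (f (p - 1) - f 0) *+ (p - 1) + (f (p - 1) - f p).
Proof.
rewrite /Ssum (big_cat_nat _ (n := (p-1)%N)) //=; last by rewrite /nv; lia.
rewrite (@sum_cst _ _ _ _ (f (p - 1) - f 0)); last first.
  move=> j hj; have -> : adjN p (p-1) j = true by rewrite /adjN; lia.
  by rewrite (hf j ltac:(lia)).
rewrite subn0 (@sum_pt _ _ (p)); last 2 first.
- rewrite /nv; lia.
- by move=> j hj hne; have -> : adjN p (p-1) j = false by rewrite /adjN; lia.
by have -> : adjN p (p-1) p = true by rewrite /adjN; lia.
Qed.

Lemma SC a : (p <= a)%N -> (a.+1 < nv p q)%N ->
  Ssum p q f a = (f a - f a.-1) + (f a - f a.+1).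
Proof.
move=> h1 h2; rewrite /Ssum (big_cat_nat _ (n := a)) //=; last by lia.
rewrite (@sum_pt _ _ (a.-1)); last 2 first.
- lia.
- by move=> j hj hne; have -> : adjN p a j = false by rewrite /adjN; lia.
rewrite (@sum_pt _ _ (a.+1)); last 2 first.
- lia.
- by move=> j hj hne; have -> : adjN p a j = false by rewrite /adjN; lia.
have -> : adjN p a a.-1 = true by rewrite /adjN; lia.
by have -> : adjN p a a.+1 = true by rewrite /adjN; lia.
Qed.

Lemma SD a : (p <= a)%N -> a.+1 = nv p q -> Ssum p q f a = f a - f a.-1.
Proof.
move=> h1 h2; rewrite /Ssum.
rewrite (@sum_pt _ _ (a.-1)); last 2 first.
- lia.
- by move=> j hj hne; have -> : adjN p a j = false by rewrite /adjN; lia.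
by have -> : adjN p a a.-1 = true by rewrite /adjN; lia.
Qed.
End Cases.

Lemma sum_ind {R : ringType} n c (g : nat -> R) : (c < n)%N ->
  \sum_(0 <= j < n) (if j == c then g j else 0) = g c.
Proof.
move=> hc; rewrite (@sum_pt _ _ c) ?eqxx //; last by move=> j _ /negbTE ->.
Qed.

Lemma EKv {R : ringType} p q (v : 'cV[R]_(nv p q)) (m : 'I_(p-2)) : (2 <= p)%N ->
  (EK R p q *m v) m 0 = fv v (p-2) - fv v (p-3-m).
Proof.
move=> hp; rewrite !mxE.
have hm := ltn_ord m.
have -> : \sum_j EK R p q m j * v j 0 =
   \sum_(0 <= j < nv p q) ((if j == (p-2)%N then fv v j else 0) - (if j == (p-3-m)%N then fv v j else 0)).
  rewrite big_mkord; apply: eq_bigr => j _; rewrite /EK !mxE fvE.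
  have -> : (vtx j == -1) = (j == (p-2)%N :> nat) by rewrite /vtx; lia.
  have -> : (vtx j == - (m.+2)%:Z) = (j == (p-3-m)%N :> nat) by rewrite /vtx; lia.
  by case: ifP => _; case: ifP => _; rewrite ?subrr ?subr0 ?sub0r ?mul1r ?mul0r ?mulNr ?mul1r.
rewrite sumrB !sum_ind //; rewrite /nv; lia.
Qed.

Fixpoint Pp {R : ringType} (l : R) (k : nat) : R :=
  match k with
  | 0 => 1
  | 1 => 1 - l
  | (k'.+1 as k1).+1 => (2 - l) * Pp l k1 - Pp l k'
  end.

Lemma PpSS {R : ringType} (l : R) k : Pp l k.+2 = (2 - l) * Pp l k.+1 - Pp l k.
Proof. by []. Qed.

Lemma Pp_rel {R : realType} (l : R) k : 4 < l ->
  Pp l k.+1 != 0 /\ Pp l k = xs k.+1 l * Pp l k.+1.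
Proof.
move=> hl; elim: k => [|k [IH1 IH2]].
  have n1 : 1 - l != 0 by apply/eqP => e; lra.
  split => //=; rewrite (_ : 2 - l - 1 = 1 - l); last by ring.
  by rewrite mulVf.
have /andP[b1 b2] := xs_bound k.+1 l hl.
set D := 2 - l - xs k.+1 l.
have Dn : D != 0 by apply/eqP => e; rewrite /D in e; lra.
have E : Pp l k.+2 = D * Pp l k.+1.
  rewrite PpSS IH2 /D; ring.
split; first by rewrite E mulf_neq0.
by rewrite E [xs k.+2 l]/= -/D mulrA mulVf ?mul1r.
Qed.

Lemma fv_col {R : ringType} n (f : nat -> R) j : (j < n)%N ->
  fv (\col_(i < n) f i) j = f j.
Proof. by move=> hj; rewrite /fv insubT mxE. Qed.

Lemma Ssum_ext {R : ringType} p q (f g : nat -> R) a : (a < nv p q)%N ->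
  (forall j, (j < nv p q)%N -> f j = g j) -> Ssum p q f a = Ssum p q g a.
Proof.
move=> ha H; rewrite /Ssum; apply: eq_big_nat => j /andP[_ hj].
by rewrite !H.
Qed.

Lemma Fq_Gf {R : realType} p q (l : R) : (2 <= q)%N -> 4 < l -> Fq p q l = Gf p q l.
Proof.
move=> hq hl; rewrite /Fq /Gf.
have -> : (q - 1 = (q - 2).+1)%N by lia.
rewrite xs_sigma //.
have -> : (2 * q - 3 = 2 * (q - 2) + 1)%N by lia.
have -> : (2 * q - 1 = 2 * (q - 2) + 3)%N by lia.
by rewrite !mulrA.
Qed.

Lemma G_to_eig {R : realType} p q (l : R) : (6 <= p)%N -> (3 <= q)%N -> 4 < l -> Gf p q l = 0 ->
  exists v : 'cV[R]_(nv p q), [/\ v != 0, laplacian R p q *m v = l *: v & in_EKperp v].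
Proof.
move=> hp hq hl hG.
have hn : nv p q = (p + q - 1)%N by [].
set b := Pp l (q-1).
set a := b / (1 - l).
have l1 : 1 - l != 0 by apply/eqP => e; lra.
have hab : b = (1 - l) * a by rewrite /a mulrC divfK.
pose f := fun j : nat => if (j < p - 1)%N then a else Pp l (nv p q - 1 - j).
have fa j : (j < p - 1)%N -> f j = a by move=> hj; rewrite /f hj.
have fP j : (p - 1 <= j)%N -> f j = Pp l (nv p q - 1 - j).
  by move=> hj; rewrite /f; have -> : (j < p - 1)%N = false by lia.
pose v := \col_(i < nv p q) f i.
have fvv : forall j, (j < nv p q)%N -> fv v j = f j by move=> j hj; rewrite fv_col.
exists v; split.
- apply/eqP => v0; have := fvv (nv p q - 1)%N ltac:(lia).
  rewrite fP; last lia.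
  have -> : (nv p q - 1 - (nv p q - 1) = 0)%N by lia.
  rewrite v0 /fv; case: insub => [i|]; rewrite ?mxE /= => e; move/eqP: e; by rewrite eq_sym oner_eq0.
- apply/matrixP => i z; rewrite (ord1 z) Lv; last lia.
  rewrite [in RHS]mxE -fvE.
  change (Ssum p q (fv v) i = l * fv v i).
  have hi := ltn_ord i.
  rewrite (@Ssum_ext _ _ _ _ f) ?fvv //.
  move: (nat_of_ord i) hi => k hk.
  have hf : forall j, (j < p - 1)%N -> f j = f 0 by move=> j hj; rewrite !fa //; lia.
  have f0 : f 0%N = a by apply: fa; lia.
  have fp1 : f (p - 1)%N = b by rewrite fP // /b; congr (Pp l _); lia.
  have fp : f p = Pp l (q - 2) by rewrite fP; [congr (Pp l _)|]; lia.
  case: (ltnP k (p-1)%N) => h1.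
    rewrite (@SA _ p q f ltac:(lia) ltac:(lia) hf k h1) f0 fp1 (fa k h1).
    rewrite hab; ring.
  case: (eqVneq k (p-1)%N) => [->|ne].
    rewrite (@SB _ p q f ltac:(lia) ltac:(lia) hf) f0 fp1 fp.
    have [_ e] := Pp_rel l (q - 2) hl.
    rewrite e (_ : ((q - 2).+1 = q - 1)%N); last lia.
    rewrite -/b -mulr_natr natrB; last lia.
    apply/eqP; rewrite -subr_eq0; apply/eqP.
    transitivity (- a * Gf p q l); last by rewrite hG mulr0.
    rewrite /Gf hab; ring.
  case: (ltnP k.+1 (nv p q)) => h2.
    rewrite (@SC _ p q f ltac:(lia) ltac:(lia) k ltac:(lia) h2).
    rewrite !fP; try lia.
    have -> : (nv p q - 1 - k.-1 = (nv p q - 2 - k).+2)%N by lia.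
    have -> : (nv p q - 1 - k = (nv p q - 2 - k).+1)%N by lia.
    have -> : (nv p q - 1 - k.+1 = (nv p q - 2 - k))%N by lia.
    rewrite PpSS; ring.
  rewrite (@SD _ p q f ltac:(lia) ltac:(lia) k ltac:(lia) ltac:(lia)).
  rewrite !fP; try lia.
  have -> : (nv p q - 1 - k.-1 = 1)%N by lia.
  have -> : (nv p q - 1 - k = 0)%N by lia.
  rewrite /=; ring.
- move=> u /submxP [w ->]; rewrite -mulmxA.
  have -> : EK R p q *m v = 0.
    apply/matrixP => m z; rewrite (ord1 z) EKv; last lia.
    have hm := ltn_ord m.
    rewrite !fvv; try lia.
    by rewrite !fa ?subrr ?mxE //; lia.
  by rewrite mulmx0.
Qed.

Lemma eig_to_G {R : realType} p q (l : R) : (6 <= p)%N -> (3 <= q)%N -> 4 < l ->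
  (exists v : 'cV[R]_(nv p q), [/\ v != 0, laplacian R p q *m v = l *: v & in_EKperp v]) ->
  Gf p q l = 0.
Proof.
move=> hp hq hl [v [vn0 E hK]].
have hn : nv p q = (p + q - 1)%N by [].
set f := fv v.
have eig : forall a, (a < nv p q)%N -> Ssum p q f a = l * f a.
  move=> a ha; have := congr1 (fun M : 'cV[R]_(nv p q) => M (Ordinal ha) 0) E.
  rewrite Lv; last lia.
  by rewrite mxE -fvE.
have key : forall m : 'I_(p-2), f (p-2)%N = f (p-3-m)%N.
  move=> m; have := hK (row m (EK R p q)) (row_sub m _).
  rewrite -row_mul => e; have := congr1 (fun M : 'M[R]_1 => M 0 0) e.
  rewrite mxE EKv; last lia.
  rewrite mxE.
  by move/eqP; rewrite subr_eq0 => /eqP.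
have g : forall j, (j <= p - 3)%N -> f j = f (p-2)%N.
  move=> j hj; have hm : (p - 3 - j < p - 2)%N by lia.
  rewrite (key (Ordinal hm)) /=; congr f; lia.
have hf : forall j, (j < p - 1)%N -> f j = f 0%N.
  move=> j hj; rewrite (g 0%N) //.
  case: (leqP j (p-3)%N) => h; first exact: g.
  by congr f; lia.
set a := f 0%N; set b := f (p-1)%N; set d := f (nv p q - 1)%N.
have E1 : a - b = l * a.
  have := eig 0%N ltac:(lia).
  by rewrite (@SA _ p q f ltac:(lia) ltac:(lia) hf 0%N ltac:(lia)).
have Eend : d - f (nv p q - 2)%N = l * d.
  have := eig (nv p q - 1)%N ltac:(lia).
  rewrite (@SD _ p q f ltac:(lia) ltac:(lia) (nv p q - 1)%N ltac:(lia) ltac:(lia)).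
  by rewrite (_ : ((nv p q - 1).-1 = nv p q - 2)%N); last lia.
have claim : forall k, (k.+1 <= q - 1)%N ->
    f (nv p q - 1 - k)%N = Pp l k * d /\ f (nv p q - 2 - k)%N = Pp l k.+1 * d.
  elim => [_|k IH hk].
    rewrite !subn0 mul1r; split => //=.
    rewrite /Pp; move: Eend; lra.
  have [IH1 IH2] := IH (ltnW hk).
  split.
    by rewrite (_ : (nv p q - 1 - k.+1 = nv p q - 2 - k)%N) //; lia.
  have := eig (nv p q - 2 - k)%N ltac:(lia).
  rewrite (@SC _ p q f ltac:(lia) ltac:(lia) (nv p q - 2 - k)%N ltac:(lia) ltac:(lia)).
  rewrite (_ : ((nv p q - 2 - k).-1 = nv p q - 2 - k.+1)%N); last lia.
  rewrite (_ : ((nv p q - 2 - k).+1 = nv p q - 1 - k)%N); last lia.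
  rewrite IH1 IH2 PpSS => e.
  apply/eqP; rewrite -subr_eq0; apply/eqP; move: e; set X := f _; move=> e.
  transitivity (- ((Pp l k.+1 * d - X) + (Pp l k.+1 * d - Pp l k * d) - l * (Pp l k.+1 * d))).
    ring.
  by rewrite e subrr oppr0.
have [c1 c2] := claim (q - 2)%N ltac:(lia).
rewrite (_ : (nv p q - 1 - (q - 2) = p)%N) in c1; last lia.
rewrite (_ : (nv p q - 2 - (q - 2) = p - 1)%N) in c2; last lia.
rewrite (_ : ((q - 2).+1 = q - 1)%N) in c2; last lia.
have [Pn Pe] := Pp_rel l (q - 2) hl.
rewrite (_ : ((q - 2).+1 = q - 1)%N) in Pn Pe; last lia.
have fp : f p = xs (q - 1) l * b.
  by rewrite c1 Pe /b c2 mulrA.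
have EB := eig (p - 1)%N ltac:(lia).
rewrite (@SB _ p q f ltac:(lia) ltac:(lia) hf) -/a -/b fp in EB.
move: EB; rewrite -mulr_natr natrB; last lia.
move=> EB.
have hab : b = (1 - l) * a by lra.
have aG : a * Gf p q l = 0.
  move: EB; rewrite hab /Gf => EB.
  nra.
case: (eqVneq (Gf p q l) 0) => // Gn.
exfalso; move/negP: vn0; apply.
have a0 : a = 0 by move/eqP: aG; rewrite mulf_eq0 (negbTE Gn) orbF => /eqP.
have b0 : b = 0 by rewrite hab a0 mulr0.
have d0 : d = 0.
  move: b0; rewrite /b c2 => /eqP; rewrite mulf_eq0 (negbTE Pn) /= => /eqP.
  done.
have fz : forall j, (j < nv p q)%N -> f j = 0.
  move=> j hj; case: (ltnP j (p-1)%N) => h; first by rewrite hf.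
  case: (eqVneq j (nv p q - 1)%N) => [->|ne]; first by [].
  have [_ e] := claim (nv p q - 2 - j)%N ltac:(lia).
  by move: e; rewrite (_ : (nv p q - 2 - (nv p q - 2 - j) = j)%N) ?d0 ?mulr0 //; lia.
apply/eqP/matrixP => i z; rewrite (ord1 z) mxE -fvE; exact: fz (ltn_ord i).
Qed.

Theorem proposition7 (R : realType) (p q : nat) (hp : (6 <= p)%N) (hq : (3 <= q)%N) :
  (forall l : R, 4 < l ->
     ((exists v : 'cV[R]_(nv p q),
         [/\ v != 0, laplacian R p q *m v = l *: v & in_EKperp v])
      <-> Fq p q l = 0))
  /\ (exists l : R, [/\ p%:R < l, l <= p%:R + 2, Fq p q l = 0 &
        forall l' : R, p%:R < l' -> l' <= p%:R + 2 -> Fq p q l' = 0 -> l' = l])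
  /\ (forall l : R, (4 < l <= p%:R) || (p%:R + 2 < l) -> Fq p q l != 0).
Proof.
have p2 : (2 <= p)%N by lia.
have q2 : (2 <= q)%N by lia.
have pR : (6:R) <= p%:R by rewrite (ler_nat R 6 p).
split; last split.
- move=> l hl; rewrite Fq_Gf //; split.
    exact: eig_to_G.
  exact: G_to_eig.
- have [c [c1 c2 c3]] := @Gf_root R p q hp q2.
  exists c; split => //; first by rewrite Fq_Gf //; lra.
  move=> l' h1 h2; rewrite Fq_Gf //; last lra.
  move=> h3; apply: (@Gf_unique R p q l' c p2) => //; lra.
- move=> l hl; have l4 : 4 < l by case/orP: hl => [/andP[]|]; lra.
  rewrite Fq_Gf //; exact: Gf_neq0.
Qed.
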